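(* Let $n\geq 2$, $\gamma\geq1$, $\alpha\in\mathbb{R}$, $\beta\in\mathbb{R}$. For $p,q,s\geq 1$ define $$\theta_1=\frac{2(p+\gamma-1)}{\gamma+1-\alpha-2\beta},\qquad \theta_2=\frac{2(q-1)(p+\gamma-1)}{p+\gamma-3},$$ and for $i=1,2$ $$\kappa_i(p,q;s)=\frac{\frac{q}{s}-\frac{q}{\theta_i}}{\frac{q}{s}-\left(\frac12-\frac1n\right)},\qquad f_i(p,q;s)=\frac{\theta_i}{q}\kappa_i(p,q;s)=\frac{\frac{\theta_i}{s}-1}{\frac{q}{s}-\left(\frac12-\frac1n\right)}.$$ Then for all sufficiently large $p>1$: (i) if $\alpha+2\beta<\gamma-1+\frac{2}{n}$, one can choose $q>1$ such that $\kappa_i(p,q;\frac{n}{n-1})\in(0,1)$ and $f_i(p,q;\frac{n}{n-1})<2$ for $i=1,2$; (ii) if $\alpha+2\beta<\gamma-1+\frac{4}{n+2}$, there exists $q>1$ such that $\kappa_i(p,q;2)\in(0,1)$ and $f_i(p,q;2)<2$ for $i=1,2$. *)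

(* Defs.v *)
From Stdlib Require Import Reals Lra.
Open Scope R_scope.

Definition theta1 (gamma alpha beta p : R) : R :=
  2 * (p + gamma - 1) / (gamma + 1 - alpha - 2 * beta).

Definition theta2 (gamma p q : R) : R :=
  2 * (q - 1) * (p + gamma - 1) / (p + gamma - 3).

Definition kappa (n : nat) (theta q s : R) : R :=
  (q / s - q / theta) / (q / s - (1/2 - 1 / INR n)).

Definition fexp (n : nat) (theta q s : R) : R :=
  theta / q * kappa n theta q s.

Definition good (n : nat) (gamma alpha beta p q s : R) : Prop :=
  (0 < kappa n (theta1 gamma alpha beta p) q s < 1 /\
   fexp n (theta1 gamma alpha beta p) q s < 2) /\
  (0 < kappa n (theta2 gamma p q) q s < 1 /\
   fexp n (theta2 gamma p q) q s < 2).

(* Main.v *)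
Require Import Defs.
From Stdlib Require Import Reals Lra.
Open Scope R_scope.

Lemma good_theta (n : nat) (th q s : R) :
  (2 <= INR n) -> 0 < s -> 0 < th -> 0 < q ->
  1/2 - 1/INR n < q/s -> s < th -> (1/2 - 1/INR n) * th < q ->
  th < s * (1 - 2 * (1/2 - 1/INR n)) + 2 * q ->
  (0 < kappa n th q s < 1) /\ fexp n th q s < 2.
Proof.
  intros Hn Hs Hth Hq H1 H2 H3 H4.
  set (c := 1/2 - 1/INR n) in *.
  assert (Ht : q = (q/s) * s) by (field; lra).
  assert (HD : q - c * s > 0).
  { set (t := q/s) in *. rewrite Ht. nra. }
  assert (HK : kappa n th q s = (q*(th-s)) / (th*(q - c*s))).
  { unfold kappa. fold c. field. lra. }
  assert (HF : fexp n th q s = (th - s) / (q - c*s)).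
  { unfold fexp. rewrite HK. field. lra. }
  rewrite HF, HK. split; [split|].
  - apply Rdiv_lt_0_compat; nra.
  - apply (Rmult_lt_reg_r (th * (q - c*s))); [nra|].
    unfold Rdiv; rewrite Rmult_assoc, Rinv_l, Rmult_1_r, Rmult_1_l; nra.
  - apply (Rmult_lt_reg_r (q - c*s)); [nra|].
    unfold Rdiv; rewrite Rmult_assoc, Rinv_l, Rmult_1_r; nra.
Qed.

Lemma generic (n : nat) (gamma alpha beta s : R) :
  2 <= INR n -> 1 <= gamma -> 0 < s <= 2 ->
  0 < gamma + 1 - alpha - 2 * beta ->
  (gamma + 1 - alpha - 2 * beta) * (2 + s * (1 - 2 * (1/2 - 1/INR n))) > 4 ->
  exists P0 : R, forall p : R, 1 < p -> P0 < p ->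
    exists q : R, 1 < q /\ good n gamma alpha beta p q s.
Proof.
  intros Hn Hg Hs Hd HdK.
  set (d := gamma + 1 - alpha - 2 * beta) in *.
  set (c := 1/2 - 1/INR n) in *.
  set (e := s * (1 - 2 * c)) in *.
  set (K := 2 + e) in *.
  assert (Hy : 0 < 1/INR n <= 1/2).
  { split. apply Rdiv_lt_0_compat; lra.
    apply (Rmult_le_reg_r (INR n)); [lra|]. unfold Rdiv.
    rewrite Rmult_assoc, Rinv_l, Rmult_1_l; lra. }
  assert (Hc : 0 <= c < 1/2) by (unfold c; lra).
  assert (He : 0 < e) by (unfold e; nra).
  set (u := 1/d).
  assert (Hu : u * d = 1) by (unfold u; field; lra).
  assert (Hu0 : 0 < u) by (unfold u; apply Rdiv_lt_0_compat; lra).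
  set (m := (u + K/4)/2).
  set (A := K/2 - 2*u).
  assert (HA : 0 < A).
  { unfold A. assert (K * d > 4) by lra.
    assert (K/2 - 2*u = (K*d - 4) * u / 2) by (unfold u; field; lra). nra. }
  assert (Hm : m - u = A/4) by (unfold m, A; field).
  assert (Hm0 : 0 < m) by lra.
  assert (HK0 : 0 < K) by (unfold K; lra).
  exists (2 + 2*K/A + 1/m + INR n + d).
  intros p Hp HP0.
  set (P := p + gamma - 1).
  assert (H2K : 2*K/A * A = 2*K) by (field; lra).
  assert (H1m : 1/m * m = 1) by (field; lra).
  assert (HKA : 0 < 2*K/A) by (apply Rdiv_lt_0_compat; lra).
  assert (Hm1 : 0 < 1/m) by (apply Rdiv_lt_0_compat; lra).
  assert (HP2 : P > 2) by (unfold P; lra).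
  assert (HPA : P * A > 2*K) by (assert (P > 2*K/A) by (unfold P; lra); assert (0 < (P - 2*K/A)*A) by (apply Rmult_lt_0_compat; lra); nra).
  assert (HPm : P * m > 1) by (assert (P > 1/m) by (unfold P; lra); assert (0 < (P - 1/m)*m) by (apply Rmult_lt_0_compat; lra); nra).
  assert (HPn : P >= INR n) by (unfold P; lra).
  assert (HPd : P > d) by (unfold P; lra).
  exists (1 + P * m). split; [lra|].
  assert (Hq12 : c < (1 + P*m)/s).
  { apply (Rmult_lt_reg_r s); [lra|]. unfold Rdiv.
    rewrite Rmult_assoc, Rinv_l, Rmult_1_r; nra. }
  assert (Hn2 : 2 * c * INR n = INR n - 2).
  { unfold c. field. lra. }
  split.
  -
    assert (HT : theta1 gamma alpha beta p = 2 * P * u).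
    { unfold theta1, P, u. fold d. field. lra. }
    rewrite HT.
    assert (HPu : P * u > 1) by nra.
    apply good_theta; try lra; fold c; try fold e.
    + exact Hq12.
    + assert (P*u < P*m) by nra. assert (c * (2*P*u) <= P*u) by nra. lra.
    + assert (P*u < P*m) by nra. lra.
  -
    set (r := P / (P - 2)).
    assert (Hr : r * (P - 2) = P) by (unfold r; field; lra).
    assert (Hr1 : r > 1) by nra.
    assert (HT : theta2 gamma p (1 + P*m) = 2 * (P*m) * r).
    { unfold theta2, r, P. field. unfold P in HP2; lra. }
    rewrite HT.
    apply good_theta; try lra; fold c; try fold e.
    + assert (0 < P*m) by lra. assert (0 < 2*(P*m)) by lra. nra.
    + exact Hq12.
    + assert (0 < P*m) by lra. assert (2*(P*m) < 2*(P*m)*r) by nra. lra.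
    +
      assert (2 * c * r <= 1).
      { assert (2*c*r*(P-2) <= P - 2).
        { replace (2*c*r*(P-2)) with (2*c*(r*(P-2))) by ring. rewrite Hr.
          assert (2*c*P*INR n <= (P-2)*INR n) by nra.
          apply (Rmult_le_reg_r (INR n)); lra. }
        apply (Rmult_le_reg_r (P-2)); lra. }
      nra.
    +
      assert (4 * m * P < K * (P - 2)).
      { assert (K - 4*m = A) by (unfold A, m; field). nra. }
      assert (2*(P*m)*r*(P-2) < (e + 2*(1+P*m))*(P-2)).
      { replace (2*(P*m)*r*(P-2)) with (2*(P*m)*(r*(P-2))) by ring. rewrite Hr.
        unfold K in *. nra. }
      apply (Rmult_lt_reg_r (P-2)); lra.
Qed.

Theorem lemma2p3 (n : nat) (gamma alpha beta : R) :
  (2 <= n)%nat -> 1 <= gamma ->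
  (alpha + 2 * beta < gamma - 1 + 2 / INR n ->
     exists P0 : R, forall p : R, 1 < p -> P0 < p ->
       exists q : R, 1 < q /\ good n gamma alpha beta p q (INR n / (INR n - 1))) /\
  (alpha + 2 * beta < gamma - 1 + 4 / (INR n + 2) ->
     exists P0 : R, forall p : R, 1 < p -> P0 < p ->
       exists q : R, 1 < q /\ good n gamma alpha beta p q 2).
Proof.
  intros Hn Hg.
  assert (Hx : 2 <= INR n) by (apply le_INR in Hn; simpl in Hn; lra).
  set (x := INR n) in *.
  split; intro H.
  - assert (2/x <= 1).
    { apply (Rmult_le_reg_r x); [lra|]. unfold Rdiv.
      rewrite Rmult_assoc, Rinv_l, Rmult_1_r; lra. }
    apply generic; try fold x; try lra.
    + split. apply Rdiv_lt_0_compat; lra.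
      apply (Rmult_le_reg_r (x - 1)); [lra|]. unfold Rdiv.
      rewrite Rmult_assoc, Rinv_l, Rmult_1_r; lra.
    + replace (2 + x / (x - 1) * (1 - 2 * (1 / 2 - 1 / x))) with (2*x/(x-1))
        by (field; lra).
      replace 4 with ((2 - 2/x) * (2*x/(x-1))) at 1 by (field; lra).
      apply Rmult_lt_compat_r; [apply Rdiv_lt_0_compat; lra | lra].
  - assert (4/(x+2) <= 1).
    { apply (Rmult_le_reg_r (x+2)); [lra|]. unfold Rdiv.
      rewrite Rmult_assoc, Rinv_l, Rmult_1_r; lra. }
    apply generic; try fold x; try lra.
    + replace (2 + 2 * (1 - 2 * (1 / 2 - 1 / x))) with (2*(x+2)/x)
        by (field; lra).
      replace 4 with ((2 - 4/(x+2)) * (2*(x+2)/x)) at 1 by (field; lra).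
      apply Rmult_lt_compat_r; [apply Rdiv_lt_0_compat; lra | lra].
Qed.
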